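(* Let $\mathcal X=\mathcal X_1\times\cdots\times\mathcal X_b$, $\mathcal X_i=\mathbb R^{m_i\times n_i}$ with trace inner product and norms $\|\cdot\|_{(i)}$ (dual $\|\cdot\|_{(i)\star}$). Let $f$ be continuously differentiable and let $\mathcal D$ be a distribution on subsets of $[b]$. Assume constants $L^0_{i,S},L^1_{i,S}\ge0$ exist such that for all $S\in\operatorname{supp}(\mathcal D)$, $i\in S$, $X\in\mathcal X$ and $\Gamma$ with $\Gamma_j=0$ for $j\notin S$: $\|\nabla_if(X+\Gamma)-\nabla_if(X)\|_{(i)\star}\le(L^0_{i,S}+L^1_{i,S}\|\nabla_if(X)\|_{(i)\star})\|\Gamma_i\|_{(i)}$. Let $S^k\in\operatorname{supp}(\mathcal D)$, $X^k,M^k\in\mathcal X$, $t_i^k>0$, and define $X^{k+1}$ by $X_i^{k+1}=\operatorname{lmo}_{\mathcal B_i(X_i^k,t_i^k)}(M_i^k)$ for $i\in S^k$ and $X_i^{k+1}=X_i^k$ for $i\notin S^k$. Then $$f(X^{k+1})\le f(X^k)+\sum_{i\in S^k}2t_i^k\|\nabla_if(X^k)-M_i^k\|_{(i)\star}-\sum_{i\in S^k}t_i^k\|\nabla_if(X^k)\|_{(i)\star}+\sum_{i\in S^k}\frac{L^0_{i,S^k}+L^1_{i,S^k}\|\nabla_if(X^k)\|_{(i)\star}}2(t_i^k)^2.$$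
   Context: $\mathcal B_i(Y,t)=\{Z\in\mathcal X_i:\|Z-Y\|_{(i)}\le t\}$ and $\operatorname{lmo}_{\mathcal B}(M)\in\arg\min_{Z\in\mathcal B}\langle M,Z\rangle$. $\operatorname{supp}(\mathcal D)$ is the set of subsets of $[b]$ with positive probability. *)

(* Defs.v *)
From mathcomp Require Import all_boot all_order all_algebra.
From mathcomp Require Import boolp classical_sets reals.
Set Implicit Arguments. Unset Strict Implicit. Unset Printing Implicit Defensive.
Import Order.TTheory GRing.Theory Num.Theory.
Local Open Scope ring_scope.
Local Open Scope classical_set_scope.

Section Defs.
Variable R : realType.

Definition trip (p q : nat) (A B : 'M[R]_(p, q)) : R := \tr (A^T *m B).

Definition is_norm (p q : nat) (N : 'M[R]_(p, q) -> R) : Prop :=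
  [/\ forall A, 0 <= N A,
      forall A, N A = 0 -> A = 0,
      forall (a : R) A, N (a *: A) = `|a| * N A
    & forall A B, N (A + B) <= N A + N B].

Definition dualn (p q : nat) (N : 'M[R]_(p, q) -> R) (M : 'M[R]_(p, q)) : R :=
  sup [set trip M Z | Z in [set Z | N Z <= 1]].

Variables (b : nat) (m n : 'I_b -> nat).

Definition prodsp := forall i : 'I_b, 'M[R]_(m i, n i).

Definition padd (X Y : prodsp) : prodsp := fun i => X i + Y i.
Definition psub (X Y : prodsp) : prodsp := fun i => X i - Y i.

Definition pip (X Y : prodsp) : R := \sum_(i < b) trip (X i) (Y i).

(* an auxiliary reference norm on X (max-abs entry), used only to
   express differentiability / continuity (all norms are equivalent) *)
Definition pnorm (X : prodsp) : R :=
  \big[Num.max/0]_(i < b) \big[Num.max/0]_(r < m i) \big[Num.max/0]_(c < n i)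
     `|X i r c|.

Definition C1_with_grad (f : prodsp -> R) (G : prodsp -> prodsp) : Prop :=
  (forall X (eps : R), 0 < eps -> exists2 delta : R, 0 < delta &
     forall H, pnorm H < delta ->
       `|f (padd X H) - f X - pip (G X) H| <= eps * pnorm H)
  /\
  (forall X (eps : R), 0 < eps -> exists2 delta : R, 0 < delta &
     forall Y, pnorm (psub Y X) < delta -> pnorm (psub (G Y) (G X)) < eps).

Definition is_distr (D : {set 'I_b} -> R) : Prop :=
  (forall S, 0 <= D S) /\ \sum_(S : {set 'I_b}) D S = 1.

Definition supp (D : {set 'I_b} -> R) : set {set 'I_b} := [set S | 0 < D S].

End Defs.

(* Main.v *)
Require Import Defs.
From HB Require Import structures.
From mathcomp Require Import all_boot all_order all_algebra.
From mathcomp Require Import all_classical all_reals all_analysis.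
From mathcomp Require Import lra.
Import Order.TTheory GRing.Theory Num.Theory.
Import numFieldNormedType.Exports.
Local Open Scope ring_scope.
Local Open Scope classical_set_scope.

Section NE.
Context {R : realType} {p q : nat} {N : 'M[R]_(p, q) -> R} (hN : is_norm N).

Lemma N0 : N 0 = 0.
Proof. case: hN => _ _ hZ _. by rewrite -(scale0r (0 : 'M[R]_(p,q))) hZ normr0 mul0r. Qed.

Lemma N_sum (I : Type) (r : seq I) (P : pred I) (F : I -> 'M[R]_(p, q)) :
  N (\sum_(i <- r | P i) F i) <= \sum_(i <- r | P i) N (F i).
Proof.
case: hN => _ _ _ hT.
elim/big_rec2: _ => [|i y x _ Hx]; first by rewrite N0.
exact: le_trans (hT _ _) (lerD _ Hx).
Qed.

Definition Nv (v : 'rV[R]_(p * q)) := N (vec_mx v).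

Lemma Nv_le v : Nv v <= `|v| * \sum_(j < p * q) Nv (delta_mx 0 j).
Proof.
case: hN => _ _ hZ _.
rewrite /Nv {1}(matrix_sum_delta v) big_ord1 linear_sum /=.
apply: le_trans; first exact: N_sum.
rewrite mulr_sumr; apply: ler_sum => j _.
rewrite linearZ /= hZ ler_wpM2r //; first by case: hN.
rewrite -[`|v|]/(mx_norm v) mx_normrE.
by apply/bigmax_geP; right; exists (0, j).
Qed.

Lemma NN A : N (- A) = N A.
Proof. case: hN => _ _ hZ _. by rewrite -scaleN1r hZ normrN normr1 mul1r. Qed.

Lemma Nv_lip x y : `|Nv x - Nv y| <= `|x - y| * \sum_(j < p * q) Nv (delta_mx 0 j).
Proof.
case: hN => _ _ _ hT.
apply: le_trans (Nv_le (x - y)).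
rewrite /Nv.
have H1 : N (vec_mx y) <= N (vec_mx x) + N (vec_mx (x - y)).
  by rewrite -[N (vec_mx (x - y))]NN -linearN /= opprB; apply: le_trans (hT _ _); rewrite -linearD /= addrC subrK.
have H2 : N (vec_mx x) <= N (vec_mx y) + N (vec_mx (x - y)).
  by apply: le_trans (hT _ _); rewrite -linearD /= addrC subrK.
rewrite ler_norml; apply/andP; split; lra.
Qed.

Lemma Nv_cont : continuous Nv.
Proof.
move=> x; apply/(@cvgrPdist_lt _ _ _ (nbhs x) (nbhs_filter x)) => e e0.
set C := \sum_(j < p * q) Nv (delta_mx 0 j).
have C0 : 0 <= C by apply: sumr_ge0 => j _; case: hN => h _ _ _; exact: h.
have eC : 0 < e / (C + 1) by rewrite divr_gt0 // ltr_wpDl.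
near=> y.
apply: le_lt_trans (Nv_lip x y) _.
have : `|x - y| < e / (C + 1).
  near: y. exact: (cvgrPdist_lt _ _).1 cvg_id _ eC.
move=> h.
apply: le_lt_trans (_ : `|x - y| * (C + 1) < e).
  by rewrite ler_wpM2l // lerDl.
by rewrite -ltr_pdivlMr // ltr_wpDl.
Unshelve. all: by end_near.
Qed.

Lemma Nv_pos_min : (0 < p * q)%N ->
  exists2 c, 0 < c & forall v, `|v| = 1 -> c <= Nv v.
Proof.
move=> pq.
set S := [set v : 'rV[R]_(p * q) | `|v| = 1].
have S0 : S !=set0.
  pose w : 'rV[R]_(p * q) := const_mx 1.
  have w0 : w != 0.
    apply/negP => /eqP /matrixP /(_ ord0 (Ordinal pq)); rewrite !mxE => /eqP.
    by rewrite oner_eq0.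
  exists (`|w|^-1 *: w); rewrite /S /= normrZ normrV ?unitfE ?normr_eq0 //.
  by rewrite normr_id mulVf // normr_eq0.
have Sc : compact S.
  apply: bounded_closed_compact.
    exists 1; split; first by rewrite realE ler01.
    by move=> M M1 v /= ->; apply: ltW.
  have -> : S = (fun v : 'rV[R]_(p * q) => `|v|) @^-1` [set 1] by [].
  by apply: (continuous_closedP _).1; [exact: norm_continuous | exact: closed_eq].
have [v0 v0S v0min] := compact_EVT_min S0 Sc (continuous_subspaceT Nv_cont).
exists (Nv v0).
  case: hN => h1 h2 _ _; rewrite lt_neqAle h1 andbT eq_sym; apply/negP => /eqP.
  move/h2 => /(congr1 mxvec); rewrite vec_mxK linear0 => v00.
  by move: v0S; rewrite inE /S /= v00 normr0 => /esym/eqP; rewrite oner_eq0.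
by move=> v v1; apply: v0min; rewrite inE.
Qed.

Lemma norm_equiv : exists2 c, 0 < c & forall (Z : 'M[R]_(p, q)) (r : 'I_p) (k : 'I_q), `|Z r k| <= c * N Z.
Proof.
case: (posnP (p * q)) => [pq0|pq].
  exists 1 => // Z r k; have := ltn_ord (mxvec_index r k); move: (nat_of_ord _) => u; by rewrite pq0.
have [c c0 hc] := Nv_pos_min pq.
exists c^-1; first by rewrite invr_gt0.
move=> Z r k.
set v := mxvec Z.
have -> : Z r k = v ord0 (mxvec_index r k) by rewrite /v mxvecE.
have hv : `|v ord0 (mxvec_index r k)| <= `|v|.
  by rewrite -[`|v|]/(mx_norm v) mx_normrE; apply/bigmax_geP; right; exists (ord0, mxvec_index r k).
apply: le_trans hv _.
have [->|vn0] := eqVneq v 0; first by rewrite normr0; apply: mulr_ge0; [rewrite invr_ge0 ltW | case: hN].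
have nv0 : 0 < `|v| by rewrite normr_gt0.
have := hc (`|v|^-1 *: v).
rewrite normrZ normrV ?unitfE ?normr_eq0 // normr_id mulVf ?normr_eq0 // => /(_ erefl).
rewrite /Nv linearZ /=; case: hN => _ _ hZ _; rewrite hZ /v mxvecK normrV ?unitfE ?normr_eq0 // normr_id.
by rewrite ler_pdivlMl // ler_pdivlMl // mulrC.
Qed.

Lemma trip_sumE (M Z : 'M[R]_(p, q)) :
  trip M Z = \sum_(k < q) \sum_(i < p) M i k * Z i k.
Proof. by rewrite /trip /mxtrace; apply: eq_bigr => k _; rewrite mxE; apply: eq_bigr => i _; rewrite mxE. Qed.

Lemma tripZ (M : 'M[R]_(p, q)) (a : R) Z : trip M (a *: Z) = a * trip M Z.
Proof. by rewrite /trip -scalemxAr mxtraceZ. Qed.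
Lemma tripD (M Z1 Z2 : 'M[R]_(p, q)) : trip M (Z1 + Z2) = trip M Z1 + trip M Z2.
Proof. by rewrite /trip mulmxDr mxtraceD. Qed.
Lemma tripN (M Z : 'M[R]_(p, q)) : trip M (- Z) = - trip M Z.
Proof. by rewrite -scaleN1r tripZ mulN1r. Qed.
Lemma trip0 (M : 'M[R]_(p, q)) : trip M 0 = 0.
Proof. by rewrite -(scale0r (0 : 'M[R]_(p,q))) tripZ mul0r. Qed.
Lemma tripBl (A B Z : 'M[R]_(p, q)) : trip (A - B) Z = trip A Z - trip B Z.
Proof. by rewrite /trip [(A - B)^T]linearB /= mulmxBl linearB. Qed.

Lemma trip_bnd (M : 'M[R]_(p, q)) : exists C, forall Z, N Z <= 1 -> trip M Z <= C.
Proof.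
have [c c0 hc] := norm_equiv.
exists (\sum_(k < q) \sum_(i < p) `|M i k| * c) => Z NZ.
rewrite trip_sumE; apply: ler_sum => k _; apply: ler_sum => i _.
apply: le_trans (ler_norm _) _; rewrite normrM ler_wpM2l //.
apply: le_trans (hc Z i k) _; by rewrite ler_piMr // ltW.
Qed.

Lemma dual_has_sup (M : 'M[R]_(p, q)) : has_sup [set trip M Z | Z in [set Z | N Z <= 1]].
Proof.
split; first by exists (trip M 0), 0 => //=; rewrite N0.
have [C hC] := trip_bnd M; exists C => _ [Z /= hZ <-]; exact: hC.
Qed.

Lemma dual_ub (M Z : 'M[R]_(p, q)) : N Z <= 1 -> trip M Z <= dualn N M.
Proof. by move=> hZ; apply: sup_upper_bound (dual_has_sup M) _ _; exists Z. Qed.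

Lemma dual_ge0 (M : 'M[R]_(p, q)) : 0 <= dualn N M.
Proof. by rewrite -(trip0 M); apply: dual_ub; rewrite N0. Qed.

Lemma dual_le (M Z : 'M[R]_(p, q)) : trip M Z <= dualn N M * N Z.
Proof.
case: hN => h1 h2 hZ _.
have [NZ0|NZ0] := eqVneq (N Z) 0.
  by rewrite (h2 _ NZ0) N0 trip0 mulr0.
have NZp : 0 < N Z by rewrite lt_neqAle eq_sym NZ0 h1.
have := dual_ub M ((N Z)^-1 *: Z).
rewrite hZ tripZ ger0_norm ?invr_ge0 // mulVf // lexx => /(_ isT).
move=> H; rewrite -ler_pdivrMr //; apply: le_trans H; by rewrite [X in X <= _]GRing.mulrC.
Qed.

Lemma dual_least (M : 'M[R]_(p, q)) (x : R) : (forall Z, N Z <= 1 -> trip M Z <= x) -> dualn N M <= x.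
Proof.
move=> H; apply: ge_sup; first by exists (trip M 0), 0 => //=; rewrite N0.
by move=> _ [Z /= hZ <-]; exact: H.
Qed.
End NE.

Lemma sup_arg {R : realType} (phi d : R -> R) (c K : R) : 0 <= K ->
 (forall s, 0 <= s <= 1 -> d s <= c + K * s) ->
 (forall s, 0 <= s <= 1 -> forall e, 0 < e -> exists2 del, 0 < del &
    forall h, `|h| < del -> `|phi (s + h) - phi s - h * d s| <= e * `|h|) ->
 phi 1 <= phi 0 + c + K / 2.
Proof.
move=> K0 hd hder; apply/ler_addgt0Pr => eps eps0.
pose A := [set s : R | 0 <= s <= 1 /\ phi s <= phi 0 + s * c + K * (s * s) / 2 + eps * s].
have A0 : A 0 by split; [rewrite lexx ler01 | lra].
have hA : has_sup A.
  split; first by exists 0.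
  by exists 1 => s [/andP[_ ->]].
set sg := sup A.
have sg0 : 0 <= sg by apply: sup_upper_bound.
have sg1 : sg <= 1 by apply: ge_sup; [exists 0 | move=> s [/andP[_ ->]]].
have sgI : 0 <= sg <= 1 by rewrite sg0 sg1.
have [del del0 hdel] := hder sg sgI (eps / 2) ltac:(lra).
have dsg := hd sg sgI.
have Asg : A sg.
  split => //.
  pose eta := Num.min (del / 2) (eps / (K + 1)).
  have eta0 : 0 < eta by rewrite lt_min !divr_gt0 //; lra.
  have [a Aa alt] := sup_adherent eta0 hA; rewrite -/sg in alt.
  have asg : a <= sg by apply: sup_upper_bound.
  have eta1 : eta <= del / 2 by rewrite ge_min lexx.
  have eta2 : eta <= eps / (K + 1) by rewrite ge_min lexx orbT.
  have h1 : `|a - sg| < del by rewrite ler0_norm; lra.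
  have := hdel _ h1; have -> : sg + (a - sg) = a by lra.
  rewrite [`|a - sg|]ler0_norm; last by lra.
  rewrite ler_norml => /andP[hl _].
  have P1 : (sg - a) * d sg <= (sg - a) * (c + K * sg) by rewrite ler_wpM2l //; lra.
  have P2 : (sg - a) * (K + 1) <= eps.
    by rewrite -ler_pdivlMr; [lra | lra].
  have P3 : K * (sg - a) * (sg - a) <= eps * (sg - a).
    rewrite ler_wpM2r //; first lra. nra.
  case: Aa => _ Aa.
  nra.
have sg_1 : sg = 1.
  apply/eqP; rewrite eq_le sg1 /=; rewrite leNgt; apply/negP => sglt.
  pose h := Num.min (del / 2) (1 - sg).
  have h0 : 0 < h by rewrite lt_min divr_gt0 //=; lra.
  have h1' : h <= del / 2 by rewrite ge_min lexx.
  have h2 : h <= 1 - sg by rewrite ge_min lexx orbT.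
  have h1 : `|h| < del by rewrite gtr0_norm //; lra.
  have := hdel _ h1; rewrite [`|h|]gtr0_norm //.
  rewrite ler_norml => /andP[_ hr].
  have P1 : h * d sg <= h * (c + K * sg) by rewrite ler_wpM2l //; lra.
  have : A (sg + h).
    split; first by apply/andP; split; lra.
    case: Asg => _ Asg.
    nra.
  move/(sup_upper_bound hA); rewrite -/sg; lra.
by case: Asg; rewrite sg_1 => _; lra.
Qed.

Section PS.
Context {R : realType} {b : nat} {m n : 'I_b -> nat}.
Local Notation P := (prodsp R m n).

Definition pscale (s : R) (X : P) : P := fun i => s *: X i.

Lemma pnorm_ge0 (X : P) : 0 <= pnorm X.
Proof.
have mx : forall x y : R, 0 <= x -> 0 <= y -> 0 <= Num.max x y.
  by move=> x y hx _; rewrite le_max hx.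
rewrite /pnorm; apply: (big_ind (fun x : R => 0 <= x)) => // i _; apply: (big_ind (fun x : R => 0 <= x)) => // r _; apply: (big_ind (fun x : R => 0 <= x)) => // c _.
Qed.

Lemma entry_le (X : P) i r c : `|X i r c| <= pnorm X.
Proof.
rewrite /pnorm.
apply: le_trans (le_bigmax _ (fun i => \big[Num.max/0]_(r < m i) \big[Num.max/0]_(c < n i) `|X i r c|) i).
apply: le_trans (le_bigmax _ (fun r => \big[Num.max/0]_(c < n i) `|X i r c|) r).
exact: (le_bigmax _ (fun c => `|X i r c|) c).
Qed.

Lemma pnorm_scale h (X : P) : pnorm (pscale h X) <= `|h| * pnorm X.
Proof.
have H0 : 0 <= `|h| * pnorm X by rewrite mulr_ge0 // pnorm_ge0.
rewrite /pnorm; apply: bigmax_le => // i _; apply: bigmax_le => // r _; apply: bigmax_le => // c _.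
by rewrite /pscale mxE normrM ler_wpM2l // entry_le.
Qed.

Lemma pip_scale (A X : P) h : pip A (pscale h X) = h * pip A X.
Proof. by rewrite /pip mulr_sumr; apply: eq_bigr => i _; exact: tripZ. Qed.

Lemma pip_split (A X : P) (S : {set 'I_b}) : (forall j, j \notin S -> X j = 0) ->
  pip A X = \sum_(i in S) trip (A i) (X i).
Proof.
move=> H; rewrite /pip (bigID (mem S)) /= [X in _ + X]big1 ?addr0 // => i iS.
by rewrite H // trip0.
Qed.
End PS.

Lemma per_block (R : realType) (p q : nat) (N : 'M[R]_(p, q) -> R) (hN : is_norm N)
  (g M X X1 : 'M[R]_(p, q)) (t : R) : 0 < t ->
  N (X1 - X) <= t ->
  (forall Z, N (Z - X) <= t -> trip M X1 <= trip M Z) ->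
  trip g (X1 - X) <= 2 * t * dualn N (g - M) - t * dualn N g.
Proof.
move=> t0 hn hmin.
set D1 := dualn N (g - M); set D2 := dualn N g.
have e1 : trip g (X1 - X) = trip (g - M) (X1 - X) + (trip M X1 - trip M X).
  rewrite tripBl !tripD !tripN; lra.
have e2 : trip (g - M) (X1 - X) <= D1 * t.
  apply: le_trans (dual_le hN _ _) _; rewrite -/D1 ler_wpM2l //; rewrite /D1; apply: (dual_ge0 hN).
have e3 : D2 <= (trip M X - trip M X1) / t + D1.
  apply: (dual_least hN) => Z hZ.
  have hz := hmin (X - t *: Z).
  have hz' : N (X - t *: Z - X) <= t.
    rewrite addrC addKr (NN hN); case: hN => _ _ hZs _; rewrite hZs ger0_norm; last exact: ltW.
    by rewrite -[leRHS]mulr1 ler_wpM2l // ltW.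
  have {hz hz'} := hz hz'; rewrite tripD tripN tripZ => hz.
  have := dual_ub hN (g - M) Z hZ; rewrite tripBl -/D1 => hd.
  have : trip M Z <= (trip M X - trip M X1) / t.
    by rewrite ler_pdivlMr // mulrC; lra.
  lra.
have e4 : t * D2 <= trip M X - trip M X1 + t * D1.
  have := ler_wpM2l (ltW t0) e3.
  by rewrite mulrDr mulrCA mulfV ?gt_eqF // mulr1.
nra.
Qed.

Theorem lemma6 (R : realType) (b : nat) (m n : 'I_b -> nat)
  (nrm : forall i : 'I_b, 'M[R]_(m i, n i) -> R)
  (f : prodsp R m n -> R) (G : prodsp R m n -> prodsp R m n)
  (D : {set 'I_b} -> R)
  (L0 L1 : 'I_b -> {set 'I_b} -> R)
  (Sk : {set 'I_b}) (Xk Mk Xk1 : prodsp R m n) (t : 'I_b -> R) :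
  (forall i, is_norm (nrm i)) ->
  C1_with_grad f G ->
  is_distr D ->
  (forall i S, 0 <= L0 i S) -> (forall i S, 0 <= L1 i S) ->
  (forall S, S \in supp D -> forall i, i \in S ->
     forall (X Gam : prodsp R m n), (forall j, j \notin S -> Gam j = 0) ->
       dualn (nrm i) (G (padd X Gam) i - G X i)
         <= (L0 i S + L1 i S * dualn (nrm i) (G X i)) * nrm i (Gam i)) ->
  Sk \in supp D ->
  (forall i, 0 < t i) ->
  (forall i, i \in Sk ->
     nrm i (Xk1 i - Xk i) <= t i /\
     (forall Z, nrm i (Z - Xk i) <= t i -> trip (Mk i) (Xk1 i) <= trip (Mk i) Z)) ->
  (forall i, i \notin Sk -> Xk1 i = Xk i) ->
  f Xk1 <= f Xk
           + \sum_(i in Sk) 2 * t i * dualn (nrm i) (G Xk i - Mk i)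
           - \sum_(i in Sk) t i * dualn (nrm i) (G Xk i)
           + \sum_(i in Sk) (L0 i Sk + L1 i Sk * dualn (nrm i) (G Xk i)) / 2 * t i ^+ 2.
Proof.
move=> hnorm hC1 _ hL0 hL1 hLip hSk ht hLMO hout.
pose g := G Xk.
pose Gam : prodsp R m n := psub Xk1 Xk.
have Gout : forall j, j \notin Sk -> Gam j = 0.
  by move=> j /hout; rewrite /Gam /psub => ->; rewrite subrr.
have Gle : forall i, i \in Sk -> nrm i (Gam i) <= t i by move=> i /hLMO [].
have Gge : forall i, 0 <= nrm i (Gam i) by move=> i; case: (hnorm i).
pose Y s : prodsp R m n := padd Xk (pscale s Gam).
pose phi s := f (Y s).
pose d s := pip (G (Y s)) Gam.
pose c := pip g Gam.
pose Lc i := L0 i Sk + L1 i Sk * dualn (nrm i) (g i).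
have Lc0 : forall i, 0 <= Lc i.
  by move=> i; rewrite addr_ge0 // mulr_ge0 // (dual_ge0 (hnorm i)).
pose K := \sum_(i in Sk) Lc i * t i ^+ 2.
have K0 : 0 <= K by apply: sumr_ge0 => i _; rewrite mulr_ge0 // exprn_ge0 // ltW.
have hd : forall s, 0 <= s <= 1 -> d s <= c + K * s.
  move=> s /andP[s0 _].
  have -> : d s = c + \sum_(i in Sk) trip (G (Y s) i - g i) (Gam i).
    rewrite /d /c !(pip_split _ _ _ Gout) -big_split /=; apply: eq_bigr => i _.
    by rewrite tripBl addrC subrK.
  rewrite lerD2l /K mulr_suml; apply: ler_sum => i iS.
  apply: le_trans (dual_le (hnorm i) _ _) _.
  have hG0 : forall j, j \notin Sk -> pscale s Gam j = 0.
    by move=> j jS; rewrite /pscale Gout // scaler0.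
  have := hLip Sk hSk i iS Xk (pscale s Gam) hG0.
  rewrite -/(Y s) -/g -/(Lc i) /pscale.
  case: (hnorm i) => _ _ hZs _; rewrite hZs ger0_norm // => hl.
  have := Gle i iS; have := Gge i; have := Lc0 i; have := ht i.
  set u := nrm i (Gam i); set w := dualn _ _; move=> t0 L0' u0 ut.
  have h1 : w * u <= Lc i * (s * u) * u by rewrite ler_wpM2r.
  have h2 : u * u <= t i * t i by rewrite ler_pM.
  have h3 : Lc i * s * (u * u) <= Lc i * s * (t i * t i) by rewrite ler_wpM2l // mulr_ge0.
  apply: le_trans h1 _.
  have -> : Lc i * (s * u) * u = Lc i * s * (u * u) by rewrite !mulrA.
  by apply: le_trans h3 _; rewrite expr2; lra.
have hder : forall s, 0 <= s <= 1 -> forall e, 0 < e -> exists2 del, 0 < del &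
    forall h, `|h| < del -> `|phi (s + h) - phi s - h * d s| <= e * `|h|.
  move=> s _ e e0.
  case: hC1 => hdiff _.
  pose P := pnorm Gam + 1.
  have P0 : 0 < P by rewrite /P ltr_wpDl // pnorm_ge0.
  have [del0 del00 hdel] := hdiff (Y s) (e / P) (divr_gt0 e0 P0).
  exists (del0 / P); first by rewrite divr_gt0.
  move=> h hh.
  have hY : padd (Y s) (pscale h Gam) = Y (s + h).
    apply: functional_extensionality_dep => i.
    by rewrite /Y /padd /pscale scalerDl addrA.
  have hpn : pnorm (pscale h Gam) <= `|h| * P.
    apply: le_trans (pnorm_scale _ _) _; rewrite ler_wpM2l // /P lerDl //.
  have hlt : pnorm (pscale h Gam) < del0.
    apply: le_lt_trans hpn _; by rewrite -ltr_pdivlMr.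
  have := hdel _ hlt; rewrite hY pip_scale -/(d s) => H.
  apply: le_trans H _.
  have -> : e * `|h| = e / P * (`|h| * P) by rewrite [`|h| * P]GRing.mulrC mulrA divfK // gt_eqF.
  by rewrite ler_wpM2l // ltW // divr_gt0.
have main := sup_arg _ _ _ _ K0 hd hder.
have Y1 : Y 1 = Xk1.
  apply: functional_extensionality_dep => i.
  by rewrite /Y /padd /pscale scale1r /Gam /psub addrC subrK.
have Y0 : Y 0 = Xk.
  apply: functional_extensionality_dep => i.
  by rewrite /Y /padd /pscale scale0r addr0.
have hc : c <= \sum_(i in Sk) (2 * t i * dualn (nrm i) (G Xk i - Mk i) - t i * dualn (nrm i) (G Xk i)).
  rewrite /c (pip_split _ _ _ Gout); apply: ler_sum => i iS.
  have [hn hmin] := hLMO i iS.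
  exact: per_block (hnorm i) _ _ _ _ _ (ht i) hn hmin.
rewrite sumrB in hc.
have eK : K / 2 = \sum_(i in Sk) (L0 i Sk + L1 i Sk * dualn (nrm i) (G Xk i)) / 2 * t i ^+ 2.
  by rewrite /K mulr_suml; apply: eq_bigr => i _; rewrite mulrAC.
rewrite -Y1; apply: le_trans main _; rewrite /phi Y0 eK.
lra.
Qed.
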